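(* Let $G$ be a locally nilpotent profinite group. Then there exist a positive integer $n$, elements $g_1,g_2\in G$ and an open subgroup $H\leq G$ such that $[g_1h_1,{}_n\,g_2h_2]=1$ for all $h_1,h_2\in H$.
   Context: For elements $x,y$ of a group, $[x,{}_0y]=x$ and $[x,{}_ny]=[[x,{}_{n-1}y],y]$ for $n\geq1$, where $[u,v]=u^{-1}v^{-1}uv$. A group is locally nilpotent if every finitely generated subgroup is nilpotent. *)

(* Defs.v *)
From HB Require Import structures.
From mathcomp Require Import all_boot all_order all_algebra.
From mathcomp Require Import all_classical all_reals all_analysis.
Set Implicit Arguments. Unset Strict Implicit. Unset Printing Implicit Defensive.
Local Open Scope classical_set_scope.

Definition group_axioms (T : Type) (mul : T -> T -> T) (inv : T -> T) (one : T) :=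
  [/\ forall x y z, mul x (mul y z) = mul (mul x y) z,
      forall x, mul one x = x,
      forall x, mul x one = x,
      forall x, mul (inv x) x = one &
      forall x, mul x (inv x) = one].

Definition topological_group (T : topologicalType) (mul : T -> T -> T)
    (inv : T -> T) (one : T) :=
  [/\ group_axioms mul inv one,
      continuous (fun p : T * T => mul p.1 p.2) &
      continuous inv].

Definition profinite_group (T : topologicalType) (mul : T -> T -> T)
    (inv : T -> T) (one : T) :=
  [/\ topological_group mul inv one,
      compact [set: T],
      hausdorff_space T &
      totally_disconnected [set: T]].

Section GroupNotions.
Variables (T : Type) (mul : T -> T -> T) (inv : T -> T) (one : T).

Definition comm (u v : T) : T := mul (mul (mul (inv u) (inv v)) u) v.

Fixpoint iter_comm (x : T) (n : nat) (y : T) : T :=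
  match n with
  | 0 => x
  | n'.+1 => comm (iter_comm x n' y) y
  end.

Definition is_subgroup (K : set T) :=
  [/\ K one, forall x y, K x -> K y -> K (mul x y) & forall x, K x -> K (inv x)].

Definition gen (S : set T) : set T :=
  [set x | forall K, is_subgroup K -> S `<=` K -> K x].

Definition finitely_generated_subgroup (K : set T) :=
  exists S : set T, finite_set S /\ K = gen S.

(* lower central series of a subgroup K: gamma_1 = K, gamma_{i+1} = [gamma_i, K] *)
Fixpoint lower_central (K : set T) (i : nat) : set T :=
  match i with
  | 0 => K
  | i'.+1 => gen [set z | exists a b, lower_central K i' a /\ K b /\ z = comm a b]
  end.

Definition nilpotent_subgroup (K : set T) :=
  exists c, lower_central K c = [set one].

Definition locally_nilpotent :=
  forall K, finitely_generated_subgroup K -> nilpotent_subgroup K.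

End GroupNotions.

(* Main.v *)
Require Import Defs.
From HB Require Import structures.
From mathcomp Require Import all_boot all_order all_algebra.
From mathcomp Require Import all_classical all_reals all_analysis.
Local Open Scope classical_set_scope.


Section Alg.
Variables (T : Type) (mul : T -> T -> T) (inv : T -> T) (one : T).
Hypothesis G : group_axioms mul inv one.

Lemma inv_one : inv one = one.
Proof. by case: G => _ _ H3 H4 _; rewrite -{1}(H3 (inv one)) H4. Qed.

Lemma comm_one_l y : comm mul inv one y = one.
Proof. by case: G => _ H2 H3 H4 _; rewrite /comm inv_one H2 H3 H4. Qed.

Lemma iter_comm_stable x y n m :
  iter_comm mul inv x n y = one -> (n <= m)%N -> iter_comm mul inv x m y = one.
Proof.
move=> Hn; elim: m => [ |m IH]; first by rewrite leqn0 => /eqP <-.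
rewrite leq_eqVlt => /orP[/eqP <- //|]; rewrite ltnS => /IH /= ->.
exact: comm_one_l.
Qed.

Lemma gen_sub S : S `<=` gen mul inv one S.
Proof. by move=> x Sx K _ SK; exact: SK. Qed.

Lemma lc_iter K x y : K x -> K y ->
  forall i, lower_central mul inv one K i (iter_comm mul inv x i y).
Proof.
move=> Kx Ky; elim => [ |i IH] //=.
apply: gen_sub; exists (iter_comm mul inv x i y), y; split => //.
Qed.

Lemma ln_engel : locally_nilpotent mul inv one ->
  forall x y, exists c, iter_comm mul inv x c y = one.
Proof.
move=> LN x y.
have fg : finitely_generated_subgroup mul inv one (gen mul inv one [set x; y]).
  by exists [set x; y]; split => //; exact: finite_set2.
case: (LN _ fg) => c Hc; exists c.
have := @lc_iter (gen mul inv one [set x; y]) x y _ _ c.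
rewrite Hc; apply; apply: gen_sub; [left|right] => //.
Qed.

End Alg.

Lemma compact_fip (X : topologicalType) (I : Type) (D : set I) (f : I -> set X) :
  compact [set: X] -> (forall i, D i -> closed (f i)) -> (exists i, D i) ->
  (forall i j, D i -> D j -> exists2 k, D k & f k `<=` f i `&` f j) ->
  (forall i, D i -> f i !=set0) -> exists z, forall i, D i -> f i z.
Proof.
move=> cX cl neU dir nz.
have FF := filter_from_filter neU dir.
have PF := filter_from_proper FF nz.
have [z [_ cz]] := cX _ PF filterT.
exists z => i Di.
have -> : f i = closure (f i) by apply/closure_id; exact: cl.
move=> B nB; apply: cz nB; by exists i.
Qed.

Lemma baire (X : topologicalType) (E : nat -> set X) :
  compact [set: X] -> hausdorff_space X -> (forall n, closed (E n)) ->
  (forall x, exists n, E n x) -> (exists x : X, True) ->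
  exists n (U : set X), [/\ open U, U !=set0 & U `<=` E n].
Proof.
move=> cX hX clE cov [x0 _].
apply: contrapT => nH.
have H n U : open U -> U !=set0 -> exists p, U p /\ ~ E n p.
  move=> oU nU; apply: contrapT => nex; apply: nH; exists n, U; split => //.
  move=> p Up; apply: contrapT => nE; apply: nex; by exists p.
have step : forall nV : nat * set X, exists W : set X,
    open nV.2 -> nV.2 !=set0 ->
    [/\ open W, W !=set0 & closure W `<=` nV.2 `&` ~` E nV.1].
  case=> n V /=; have [oV|] := pselect (open V); last by move=> h; exists set0.
  have [nV|] := pselect (V !=set0); last by move=> h; exists set0.
  have [p [Vp nEp]] := H n V oV nV.
  have nb : nbhs p (V `&` ~` E n).
    apply: open_nbhs_nbhs; split => //; apply: openI => //; exact: closed_openC.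
  have [W0 nW0 sW0] := compact_regular hX cX (filterT) nb.
  exists (W0°) => _ _; split.
  - exact: open_interior.
  - by exists p; exact: (nbhs_singleton (nbhs_interior nW0)).
  - apply: subset_trans sW0; apply: closureS; exact: interior_subset.
have [f Hf] := choice step.
pose U := fix U n := if n is m.+1 then f (m, U m) else setT.
have oU n : open (U n) /\ U n !=set0.
  elim: n => [ |n [oU0 neU]]; first by split; [exact: openT| exists x0].
  by case: (Hf (n, U n) oU0 neU) => a b _; split.
have HU n : closure (U n.+1) `<=` U n `&` ~` E n.
  by case: (oU n) => oU0 neU; case: (Hf (n, U n) oU0 neU).
have dec m n : (m <= n)%N -> U n `<=` U m.
  elim: n => [ |n IH]; first by rewrite leqn0 => /eqP->.
  rewrite leq_eqVlt => /orP[/eqP -> //|]; rewrite ltnS => lt p Up.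
  by apply: (IH lt); exact: (HU n p (subset_closure Up)).1.
have [z Hz] : exists z, forall i : nat, setT i -> closure (U i) z.
  apply: (@compact_fip X nat setT (fun n => closure (U n)) cX
    (fun i _ => @closed_closure _ (U i)) (ex_intro _ 0%N I)).
- move=> i j _ _; exists (maxn i j) => //.
  move=> p cp; split; apply: (closureS (dec _ _ _)) cp;
    [exact: leq_maxl|exact: leq_maxr].
- move=> i _; case: (oU i) => _ [p Up]; exists p; exact: subset_closure.
have [n En] := cov z.
by have := HU n z (Hz n.+1 I); case.
Qed.


Lemma hausdorff_prod (X Y : topologicalType) :
  hausdorff_space X -> hausdorff_space Y -> hausdorff_space (X * Y)%type.
Proof.
move=> hX hY [p1 p2] [q1 q2] cl; congr pair.
- apply: hX => A B nA nB.
  have nA' : nbhs (p1, p2) (A `*` [set: Y]).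
    by exists (A, setT) => //; split => //; exact: filterT.
  have nB' : nbhs (q1, q2) (B `*` [set: Y]).
    by exists (B, setT) => //; split => //; exact: filterT.
  have [[z1 z2] [[Az _] [Bz _]]] := cl _ _ nA' nB'.
  by exists z1.
- apply: hY => A B nA nB.
  have nA' : nbhs (p1, p2) ([set: X] `*` A).
    by exists (setT, A) => //; split => //; exact: filterT.
  have nB' : nbhs (q1, q2) ([set: X] `*` B).
    by exists (setT, B) => //; split => //; exact: filterT.
  have [[z1 z2] [[_ Az] [_ Bz]]] := cl _ _ nA' nB'.
  by exists z2.
Qed.

Lemma tdisc_zero_dim (X : topologicalType) : compact [set: X] ->
  hausdorff_space X -> totally_disconnected [set: X] -> zero_dimensional X.
Proof.
move=> cX hX tdX x y xy.
apply: contrapT => nU.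
have allU : forall U, clopen U -> U x -> U y.
  move=> U cU Ux; apply: contrapT => nUy; apply: nU; exists U; split => //.
pose Q := \bigcap_(U in [set U | clopen U /\ U x]) U.
have Qx : Q x by move=> U [].
have Qy : Q y by move=> U [cU Ux]; exact: allU.
have clQ : closed Q by apply: closed_bigI => U [[_ ?] _].
have key : forall A B, Q = A `|` B -> separated A B -> A x -> B !=set0 -> False.
  move=> A B QAB [sA sB] Ax [b Bb].
  have clA : closed A.
    move=> a cAa.
    have : Q a by apply: clQ; apply: (closureS _ cAa); rewrite QAB; exact: subsetUl.
    rewrite QAB => -[//|Ba].
    by have : (closure A `&` B) a by []; rewrite sA.
  have clB : closed B.
    move=> a cBa.
    have : Q a by apply: clQ; apply: (closureS _ cBa); rewrite QAB; exact: subsetUr.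
    rewrite QAB => -[Aa|//].
    by have : (A `&` closure B) a by []; rewrite sB.
  have AB0 : forall z, A z -> B z -> False.
    move=> z Az Bz.
    have : (A `&` closure B) z by split => //; exact: subset_closure.
    by rewrite sB.
  have nX := compact_normal hX cX.
  have snA : set_nbhs A (~` B).
    move=> a Aa; apply: open_nbhs_nbhs; split; first exact: closed_openC.
    by move=> Ba; exact: AB0 Aa Ba.
  have [W' snW' clW'] := nX A clA _ snA.
  have AU : A `<=` W'° by move=> a Aa; exact: snW'.
  have BV : B `<=` ~` closure W' by move=> z Bz /clW'; apply.
  pose Z := ~` (W'° `|` ~` closure W').
  have [D [[cD Dx] DZ]] : exists D, (clopen D /\ D x) /\ D `&` Z = set0.
    apply: contrapT => nD.
    have [z Hz] : exists z, forall i, (clopen i /\ i x) -> (i `&` Z) z.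
      apply: (@compact_fip X (set X) [set D | clopen D /\ D x] (fun D => D `&` Z) cX).
      - move=> i [[_ ci] _]; apply: closedI => //; apply: open_closedC.
        apply: openU; first exact: open_interior.
        exact/closed_openC/closed_closure.
      - by exists setT; split => //; exact: clopenT.
      - move=> i j [ci xi] [cj xj]; exists (i `&` j).
          by split; [exact: clopenI | split].
        by move=> p [[ip jp] Zp].
      - move=> i Di; apply/set0P/eqP => h; apply: nD; by exists i.
    have [_ Zz] := Hz setT (conj clopenT I).
    have : Q z by move=> i Di; have [] := Hz i Di.
    rewrite QAB => -[/AU|/BV] zz; apply: Zz; by [left|right].
  pose D' := D `&` closure W'.
  have D'E : D' = D `&` W'°.
    apply/seteqP; split => p [Dp Wp]; split => //.
      apply: contrapT => nWp.
      have : (D `&` Z) p by split => //; move=> [//|]; apply.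
      by rewrite DZ.
    by apply: subset_closure; apply: interior_subset.
  have cD' : clopen D'.
    split; last exact: closedI (cD.2) (@closed_closure _ _).
    rewrite D'E; apply: openI (cD.1) _; exact: open_interior.
  have D'x : D' x by rewrite D'E; split => //; exact: AU.
  have Qb : Q b by rewrite QAB; right.
  have [_ cb] : D' b := Qb D' (conj cD' D'x).
  exact: clW' _ cb Bb.
have cQ : connected Q.
  apply/connectedP => E [E0 EQ sE].
  have := Qx; rewrite EQ => -[Ex|Ex].
  - exact: key EQ sE Ex (E0 true).
  - apply: (key (E true) (E false)) => //; first by rewrite setUC.
    by rewrite separatedC.
have := connected_component_max Qx (@subsetT _ Q) cQ Qy.
rewrite tdX // => yx; move: xy; rewrite yx eqxx.
by [].
Qed.


Section TopGroup.
Variables (T : topologicalType) (mul : T -> T -> T) (inv : T -> T) (one : T).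
Hypothesis TG : topological_group mul inv one.

Let G : group_axioms mul inv one. Proof. by case: TG. Qed.
Let cm : continuous (fun p : T * T => mul p.1 p.2). Proof. by case: TG. Qed.
Let ci : continuous inv. Proof. by case: TG. Qed.

Lemma mul_nbhs_l a x W : nbhs (mul a x) W -> nbhs x [set y | W (mul a y)].
Proof.
move=> nW; have [[A1 A2] [nA1 nA2] sub] := cm (a, x) W nW.
apply: filterS nA2 => y A2y.
exact: (sub (a, y)) (conj (nbhs_singleton nA1) A2y).
Qed.

Lemma inv_nbhs x W : nbhs (inv x) W -> nbhs x [set y | W (inv y)].
Proof. by move=> nW; exact: ci _ W nW. Qed.

Lemma open_subgroup_of_nbhs (H S : set T) :
  is_subgroup mul inv one H -> nbhs one S -> S `<=` H -> open H.
Proof.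
case: G => assoc m1 m2 m3 m4 [H1 HM HI] nS SH; rewrite openE => h Hh.
have : nbhs (mul (inv h) h) S by rewrite m3.
move/mul_nbhs_l; apply: filterS => y Sy.
have := HM _ _ Hh (SH _ Sy).
by rewrite assoc m4 m1.
Qed.

Lemma cont_mul2 (f g : T * T -> T) : continuous f -> continuous g ->
  continuous (fun p => mul (f p) (g p)).
Proof.
move=> cf cg p W nW.
have := cm (f p, g p) W nW.
move=> [[A B] [nA nB] sAB].
have hA : nbhs p (f @^-1` A) := cf p A nA.
have hB : nbhs p (g @^-1` B) := cg p B nB.
have hI := filterI hA hB.
change (nbhs p [set q | W (mul (f q) (g q))]).
have sub : f @^-1` A `&` g @^-1` B `<=` [set q | W (mul (f q) (g q))].
  move=> q [Aq Bq]; exact: (sAB (f q, g q)).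
have FF : Filter (nbhs p) by exact: nbhs_filter.
exact: (filterS sub (hI FF)).
Qed.

Lemma cont_inv2 (f : T * T -> T) : continuous f -> continuous (fun p => inv (f p)).
Proof. by move=> cf p W nW; exact: (cf p _ (ci (f p) W nW)). Qed.

Lemma cont_iter n : continuous (fun p : T * T => iter_comm mul inv p.1 n p.2).
Proof.
have cfst : continuous (fun p : T * T => p.1).
  move=> [p1 p2] W nW; rewrite /nbhs /=.
  exists (W, setT); first by split => //=; exact: filterT.
  by move=> [a b] [].
have csnd : continuous (fun p : T * T => p.2).
  move=> [p1 p2] W nW; rewrite /nbhs /=.
  exists (setT, W); first by split => //=; exact: filterT.
  by move=> [a b] [].
elim: n => [|n IH] //=.
rewrite /comm; apply: cont_mul2 => //; apply: cont_mul2 => //.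
apply: cont_mul2; exact: cont_inv2.
Qed.

Hypothesis PF : profinite_group mul inv one.

Lemma small_open_subgroup V : nbhs one V ->
  exists H, [/\ is_subgroup mul inv one H, open H & H `<=` V].
Proof.
case: PF => _ cX hX tdX nV.
case: G => assoc m1 m2 m3 m4.
have zd := @tdisc_zero_dim _ cX hX tdX.
have [D [D1 [oD clD]] DV] := zero_dimensional_cvg hX zd cX nV.
have cD : compact D by apply: subclosed_compact clD cX _.
have hyp : forall c, D c -> \forall x' \near c & i \near nbhs one, D (mul x' i).
  move=> c Dc.
  have nD : nbhs (mul c one) D by rewrite m2; exact: open_nbhs_nbhs.
  have h : nbhs (c, one) [set p : T * T | D (mul p.1 p.2)] := cm (c, one) D nD.
  exact: h.
have := (compact_near_coveringP D).1 cD T (nbhs one) (fun q c => D (mul c q)) _ hyp.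
move=> /(_ (nbhs_filter _)) nN.
set N := [set q | D `<=` (fun c => D (mul c q))] in nN.
have nNi : nbhs one [set q | N (inv q)].
  apply: inv_nbhs; rewrite (@inv_one _ _ _ _ G); exact: nN.
pose S := N `&` [set q | N (inv q)].
have nS : nbhs one S by exact: filterI.
pose H := [set x | forall c, D c <-> D (mul c x)].
have sgH : is_subgroup mul inv one H.
  split.
  - by move=> c; rewrite m2.
  - move=> x y Hx Hy c; rewrite assoc.
    by split => [/(Hx c).1/(Hy _).1|/(Hy _).2/(Hx c).2].
  - move=> x Hx c; have := Hx (mul c (inv x)).
    rewrite -assoc m3 m2 => e; split => [/e.2|/e.1] //.
have SH : S `<=` H.
  move=> s [Ns Nis] c; split => [Dc|Dcs]; first exact: Ns.
  by have := Nis _ Dcs; rewrite -assoc m4 m2.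
exists H; split => //.
- exact: (@open_subgroup_of_nbhs H S sgH nS SH).
- move=> x Hx; apply: DV; have := (Hx one).1 D1; by rewrite m1.
Qed.
End TopGroup.

Theorem lemma2p5 (T : topologicalType) (mul : T -> T -> T) (inv : T -> T) (one : T) :
  profinite_group mul inv one ->
  locally_nilpotent mul inv one ->
  exists (n : nat) (g1 g2 : T) (H : set T),
    (0 < n)%N /\ is_subgroup mul inv one H /\ open H /\
    forall h1 h2, H h1 -> H h2 ->
      iter_comm mul inv (mul g1 h1) n (mul g2 h2) = one.
Proof.
move=> PF LN; have PF' := PF.
case: PF => TG cX hX tdX.
have G : group_axioms mul inv one by case: TG.
have [assoc m1 m2 m3 m4] := G.
pose E n := [set p : T * T | iter_comm mul inv p.1 n p.2 = one].
have clE n : closed (E n).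
  apply: (@preimage_closed _ _ (fun p : T * T => iter_comm mul inv p.1 n p.2) [set one]).
  - move=> p _; exact: (@cont_iter _ _ _ _ TG n p).
  - by apply: accessible_closed_set1; apply: hausdorff_accessible.
have cov : forall p : T * T, exists n, E n p.
  move=> [x y]; have [c Hc] := @ln_engel _ _ _ _ LN x y; by exists c.
have cXX : compact [set: (T * T)%type] by have := compact_setX cX cX; rewrite setXTT.
have hXX : hausdorff_space (T * T)%type := @hausdorff_prod _ _ hX hX.
have [n [W [oW [[g1 g2] Wg] sWE]]] :=
  @baire _ E cXX hXX clE cov (ex_intro _ (one, one) I).
have nW : nbhs (g1, g2) W by exact: open_nbhs_nbhs.
move: nW; rewrite /nbhs /= => -[[A1 A2] [nA1 nA2] sA].
have nV1 : nbhs one [set h | A1 (mul g1 h)].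
  by apply: (@mul_nbhs_l _ _ _ _ TG); rewrite m2.
have nV2 : nbhs one [set h | A2 (mul g2 h)].
  by apply: (@mul_nbhs_l _ _ _ _ TG); rewrite m2.
have [H [sgH oH HV]] := @small_open_subgroup _ _ _ _ TG PF' _ (filterI nV1 nV2).
exists n.+1, g1, g2, H; split => //; split => //; split => //.
move=> h1 h2 Hh1 Hh2.
apply: (@iter_comm_stable _ _ _ _ G _ _ n) => //.
have [V1 _] := HV _ Hh1; have [_ V2] := HV _ Hh2.
exact: (sWE _ (sA (mul g1 h1, mul g2 h2) (conj V1 V2))).
Qed.
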